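(* Let $N$ be a simply connected $2$-step nilpotent Lie group with Lie algebra $\mathfrak n$ and a left-invariant pseudo-Riemannian metric $\langle\cdot,\cdot\rangle$ whose center $\mathfrak z$ is nondegenerate, and suppose $(N,\langle\cdot,\cdot\rangle)$ is of pseudo$H$-type. Then $(N,\langle\cdot,\cdot\rangle)$ has a nontrivial nilsoliton, i.e. there exist $c\in\mathbb R$ and a derivation $D$ of $\mathfrak n$ with $\mathrm{Ric}=c\cdot\mathrm{Id}+D$.
   Context: For $y\in\mathfrak n$ define $J_y:\mathfrak n\to\mathfrak n$ by $\langle J_y x,w\rangle=\langle y,[x,w]\rangle$ for all $x,w\in\mathfrak n$. With nondegenerate center $\mathfrak z$ put $\mathfrak v=\mathfrak z^{\perp}$, so $\mathfrak n=\mathfrak z\oplus\mathfrak v$ and $J_z$ preserves $\mathfrak v$ for $z\in\mathfrak z$. The group is of pseudo$H$-type if $J_z^2=\langle z,z\rangle I$ on $\mathfrak v$ for all $z\in\mathfrak z$. $\mathrm{Ric}$ denotes the Ricci operator of the left-invariant metric, i.e. the endomorphism of $\mathfrak n$ with $\langle \mathrm{Ric}\,x,y\rangle=\varrho(x,y)$, $\varrho$ the Ricci tensor. A left-invariant metric is an algebraic Ricci soliton (on a nilpotent group: a nilsoliton) if $\mathrm{Ric}=c\cdot\mathrm{Id}+D$ for some $c\in\mathbb R$ and some derivation $D$ of $\mathfrak n$ (i.e. $D[X,Y]=[DX,Y]+[X,DY]$). The paper uses ''nontrivial'' without further definition; here $N$ is non-abelian. *)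

(* Defs.v *)
(* A finite-dimensional real Lie algebra n = R^m is modelled
   on row vectors 'rV[R]_m, with a bracket given as a function and a
   left-invariant pseudo-Riemannian metric given by a symmetric invertible
   Gram matrix G: <x,y> = x G y^T. *)
From HB Require Import structures.
From mathcomp Require Import all_boot all_order all_algebra.
From mathcomp Require Import reals.
Set Implicit Arguments. Unset Strict Implicit. Unset Printing Implicit Defensive.
Import Order.TTheory GRing.Theory Num.Theory.
Local Open Scope ring_scope.

Section Defs.
Variables (R : realType) (m : nat).
Notation V := 'rV[R]_m.

Definition ip (G : 'M[R]_m) (x y : V) : R := (x *m G *m y^T) 0 0.

Definition ev (j : 'I_m) : V := delta_mx 0 j.

Definition is_lie_bracket (br : V -> V -> V) : Prop :=
  [/\ (forall (a : R) (x y w : V), br (a *: x + y) w = a *: br x w + br y w),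
      (forall (a : R) (x y w : V), br w (a *: x + y) = a *: br w x + br w y),
      (forall x : V, br x x = 0) &
      (forall x y w : V, br x (br y w) + br y (br w x) + br w (br x y) = 0)].

Definition two_step_nilpotent (br : V -> V -> V) : Prop :=
  (forall x y w : V, br (br x y) w = 0) /\ (exists x y : V, br x y != 0).

Definition pseudo_metric (G : 'M[R]_m) : Prop := G^T = G /\ G \in unitmx.

Definition in_center (br : V -> V -> V) (z : V) : Prop := forall y : V, br z y = 0.

Definition center_nondegenerate (br : V -> V -> V) (G : 'M[R]_m) : Prop :=
  forall z : V, in_center br z ->
    (forall z' : V, in_center br z' -> ip G z z' = 0) -> z = 0.

Definition in_v (br : V -> V -> V) (G : 'M[R]_m) (x : V) : Prop :=
  forall z : V, in_center br z -> ip G z x = 0.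

(* J_y x, defined by <J_y x, w> = <y, [x, w]> for all w *)
Definition Jop (br : V -> V -> V) (G : 'M[R]_m) (y x : V) : V :=
  (\row_j ip G y (br x (ev j))) *m invmx G.

Definition pseudoH_type (br : V -> V -> V) (G : 'M[R]_m) : Prop :=
  forall z : V, in_center br z ->
    forall x : V, in_v br G x -> Jop br G z (Jop br G z x) = ip G z z *: x.

(* Levi-Civita connection of the left-invariant metric (Koszul formula):
   2 <nabla_x y, w> = <[x,y],w> - <[y,w],x> + <[w,x],y> *)
Definition nabla (br : V -> V -> V) (G : 'M[R]_m) (x y : V) : V :=
  2^-1 *: ((\row_j (ip G (br x y) (ev j) - ip G (br y (ev j)) x
                    + ip G (br (ev j) x) y)) *m invmx G).

Definition curv (br : V -> V -> V) (G : 'M[R]_m) (x y w : V) : V :=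
  nabla br G x (nabla br G y w) - nabla br G y (nabla br G x w)
  - nabla br G (br x y) w.

Definition ricci_tensor (br : V -> V -> V) (G : 'M[R]_m) (y w : V) : R :=
  \sum_(i < m) (curv br G (ev i) y w) 0 i.

(* Ricci operator (acting on row vectors x |-> x *m Ric):
   <Ric x, y> = rho(x, y) *)
Definition ricci_op (br : V -> V -> V) (G : 'M[R]_m) : 'M[R]_m :=
  (\matrix_(i, j) ricci_tensor br G (ev i) (ev j)) *m invmx G.

Definition is_derivation (br : V -> V -> V) (D : 'M[R]_m) : Prop :=
  forall x y : V, br x y *m D = br (x *m D) y + br x (y *m D).

End Defs.

(* Main.v *)
Require Import Defs.
From mathcomp Require Import all_boot all_order all_algebra.
From mathcomp Require Import reals.
From mathcomp Require Import ring lra.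
Set Implicit Arguments. Unset Strict Implicit. Unset Printing Implicit Defensive.
Import GRing.Theory Num.Theory.
Local Open Scope ring_scope.

Section Main.
Variables (R : realType) (m : nat).
Local Notation V := 'rV[R]_m.
Variables (br : V -> V -> V) (G : 'M[R]_m).
Hypothesis Hlie : is_lie_bracket br.
Hypothesis HG : pseudo_metric G.

Local Notation ip := (ip G).
Local Notation Gi := (invmx G).

Definition lin n (f : V -> 'rV[R]_n) := forall a x y, f (a *: x + y) = a *: f x + f y.

Lemma lin0 n (f : V -> 'rV[R]_n) : lin f -> f 0 = 0.
Proof.
move=> hf; have := hf 1 0 0; rewrite !scale1r addr0.
by move=> h; apply: (@addrI _ (f 0)); rewrite addr0 -h.
Qed.

Lemma linD n (f : V -> 'rV[R]_n) : lin f -> forall x y, f (x + y) = f x + f y.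
Proof. by move=> hf x y; have := hf 1 x y; rewrite !scale1r. Qed.

Lemma linZ n (f : V -> 'rV[R]_n) : lin f -> forall a x, f (a *: x) = a *: f x.
Proof. by move=> hf a x; rewrite -[a *: x]addr0 hf lin0 // addr0. Qed.

Lemma linN n (f : V -> 'rV[R]_n) : lin f -> forall x, f (- x) = - f x.
Proof. by move=> hf x; rewrite -scaleN1r linZ // scaleN1r. Qed.

Lemma linB n (f : V -> 'rV[R]_n) : lin f -> forall x y, f (x - y) = f x - f y.
Proof. by move=> hf x y; rewrite linD // linN. Qed.

Lemma lin_sum n (f : V -> 'rV[R]_n) (c : 'I_m -> R) (v : 'I_m -> V) : lin f ->
  f (\sum_i c i *: v i) = \sum_i c i *: f (v i).
Proof.
move=> hf; apply: (big_rec2 (fun s t => f s = t)); first exact: lin0.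
by move=> i s t _ <-; rewrite hf.
Qed.

Definition matf n (f : V -> 'rV[R]_n) : 'M[R]_(m, n) := \matrix_(i, j) f 'e_i 0 j.

Lemma row_matf n (f : V -> 'rV[R]_n) i : row i (matf f) = f 'e_i.
Proof. by apply/rowP => j; rewrite !mxE. Qed.

Lemma matfP n (f : V -> 'rV[R]_n) x : lin f -> x *m matf f = f x.
Proof.
move=> hf; rewrite mulmx_sum_row {2}(row_sum_delta x) lin_sum //.
by apply: eq_bigr => i _; rewrite row_matf.
Qed.

Lemma matf_ext n (f : V -> 'rV[R]_n) (A : 'M_(m, n)) :
  (forall i, f 'e_i = 'e_i *m A) -> matf f = A.
Proof. by move=> h; apply/row_matrixP => i; rewrite row_matf h rowE. Qed.

Lemma mx_ext (A B : 'M[R]_m) : (forall x : V, x *m A = x *m B) -> A = B.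
Proof. by move=> h; apply/row_matrixP => i; rewrite !rowE h. Qed.


Let Gsym : G^T = G. Proof. by case: HG. Qed.
Let Gunit : G \in unitmx. Proof. by case: HG. Qed.
Let Gisym : Gi^T = Gi. Proof. by rewrite trmx_inv Gsym. Qed.

Lemma ipC x y : ip x y = ip y x.
Proof.
have h (A : 'M[R]_1) : A 0 0 = A^T 0 0 by rewrite mxE.
by rewrite /ip [RHS]h !trmx_mul trmxK Gsym mulmxA.
Qed.

Lemma ipDl x y t : ip (x + y) t = ip x t + ip y t.
Proof. by rewrite /ip !mulmxDl mxE. Qed.
Lemma ipZl a x t : ip (a *: x) t = a * ip x t.
Proof. by rewrite /ip -!scalemxAl mxE. Qed.
Lemma ipDr x y t : ip t (x + y) = ip t x + ip t y.
Proof. by rewrite ipC ipDl ipC [ip y t]ipC. Qed.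
Lemma ipZr a x t : ip t (a *: x) = a * ip t x.
Proof. by rewrite ipC ipZl ipC. Qed.
Lemma ipNl x t : ip (- x) t = - ip x t.
Proof. by rewrite -scaleN1r ipZl mulN1r. Qed.
Lemma ipNr x t : ip t (- x) = - ip t x.
Proof. by rewrite -scaleN1r ipZr mulN1r. Qed.
Lemma ipBl x y t : ip (x - y) t = ip x t - ip y t.
Proof. by rewrite ipDl ipNl. Qed.
Lemma ipBr x y t : ip t (x - y) = ip t x - ip t y.
Proof. by rewrite ipDr ipNr. Qed.
Lemma ip0l t : ip 0 t = 0.
Proof. by rewrite /ip !mul0mx mxE. Qed.
Lemma ip0r t : ip t 0 = 0.
Proof. by rewrite ipC ip0l. Qed.

Lemma ip_suml (I : finType) (c : I -> R) (v : I -> V) t :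
  ip (\sum_i c i *: v i) t = \sum_i c i * ip (v i) t.
Proof.
apply: (big_rec2 (fun s u => ip s t = u)); first exact: ip0l.
by move=> i s u _ <-; rewrite ipDl ipZl.
Qed.
Lemma ip_sumr (I : finType) (c : I -> R) (v : I -> V) t :
  ip t (\sum_i c i *: v i) = \sum_i c i * ip t (v i).
Proof. by rewrite ipC ip_suml; apply: eq_bigr => i _; rewrite ipC. Qed.

Lemma ipe x j : ip x 'e_j = (x *m G) 0 j.
Proof. by rewrite /ip trmx_delta -colE !mxE. Qed.

Lemma ip_rowGi (r : V) t : ip (r *m Gi) t = \sum_j r 0 j * t 0 j.
Proof.
rewrite /ip mulmxKV // mxE; apply: eq_bigr => j _; by rewrite !mxE.
Qed.

Lemma ip_inj a b : (forall t, ip a t = ip b t) -> a = b.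
Proof.
move=> h; suff : a *m G = b *m G.
  by move=> /(congr1 (fun M => M *m Gi)); rewrite !mulmxK.
by apply/rowP => j; rewrite -!ipe h.
Qed.


Lemma brl w : lin (fun x => br x w).
Proof. by case: Hlie => hl _ _ _ a x y; apply: hl. Qed.
Lemma brr w : lin (br w).
Proof. by case: Hlie => _ hr _ _ a x y; apply: hr. Qed.
Lemma brxx x : br x x = 0.
Proof. by case: Hlie. Qed.
Lemma brN x y : br x y = - br y x.
Proof.
have := brxx (x + y); rewrite (linD (brl _)) !(linD (brr _)) !brxx add0r addr0.
by move/eqP; rewrite addr_eq0 => /eqP.
Qed.

Lemma ev_sum (t : V) : t = \sum_j t 0 j *: 'e_j.
Proof. exact: row_sum_delta. Qed.

Lemma ip_exp a t : ip a t = \sum_j t 0 j * ip a 'e_j.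
Proof. by rewrite {1}(ev_sum t) ip_sumr. Qed.
Lemma ip_br_exp a x t : ip a (br x t) = \sum_j t 0 j * ip a (br x 'e_j).
Proof. by rewrite {1}(ev_sum t) lin_sum ?ip_sumr //; exact: brr. Qed.

Lemma ipJ y x t : ip (Jop br G y x) t = ip y (br x t).
Proof.
rewrite /Jop ip_rowGi [in RHS](ev_sum t) lin_sum ?ip_sumr; last exact: brr.
by apply: eq_bigr => j _; rewrite mxE mulrC.
Qed.

Lemma JopDl y y' x : Jop br G (y + y') x = Jop br G y x + Jop br G y' x.
Proof. by apply: ip_inj => t; rewrite ipDl !ipJ ipDl. Qed.
Lemma JopZl a y x : Jop br G (a *: y) x = a *: Jop br G y x.
Proof. by apply: ip_inj => t; rewrite ipZl !ipJ ipZl. Qed.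
Lemma Jop_linl x : lin (fun y => Jop br G y x).
Proof. by move=> a y y'; rewrite JopDl JopZl. Qed.
Lemma Jop_linr y : lin (Jop br G y).
Proof.
move=> a x x'; apply: ip_inj => t.
by rewrite ipDl ipZl !ipJ (brl t) ipDr ipZr.
Qed.

Lemma nablaE x y :
  nabla br G x y = 2^-1 *: (br x y - Jop br G x y - Jop br G y x).
Proof.
congr (_ *: _); apply: ip_inj => t.
rewrite ip_rowGi !ipBl !ipJ (ip_exp (br x y) t) !ip_br_exp.
rewrite -!sumrB; apply: eq_bigr => j _; rewrite !mxE /ev.
rewrite [ip (br y 'e_j) x]ipC [br 'e_j x]brN ipNl [ip (br x 'e_j) y]ipC; ring.
Qed.


Hypothesis H2 : two_step_nilpotent br.
Hypothesis Hcn : center_nondegenerate br G.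

Lemma cen_br x y : in_center br (br x y).
Proof. by case: H2 => h _ w; apply: h. Qed.

Lemma cen_lin z : (forall j, br z 'e_j = 0) -> in_center br z.
Proof.
move=> h y; rewrite (ev_sum y) lin_sum; last exact: brr.
by apply: big1 => j _; rewrite h scaler0.
Qed.

Definition cenF (z : V) : 'rV[R]_(m * m) := mxvec (\matrix_(j, k) (br z 'e_j) 0 k).
Definition cenM := matf cenF.

Lemma cenF_lin : lin cenF.
Proof.
move=> a x y; rewrite /cenF -linearZ -raddfD /=; congr mxvec.
by apply/matrixP => j k; rewrite !mxE (brl _) !mxE.
Qed.

Lemma cenP z : in_center br z <-> z *m cenM = 0.
Proof.
rewrite /cenM matfP; last exact: cenF_lin.
split=> [hz|].
  by apply/eqP; rewrite /cenF mxvec_eq0; apply/eqP/matrixP => j k; rewrite !mxE hz mxE.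
move/eqP; rewrite /cenF mxvec_eq0 => /eqP h; apply: cen_lin => j.
by apply/rowP => k; move/matrixP: h => /(_ j k); rewrite !mxE.
Qed.

Definition Bc := locked (row_base (kermx cenM)).

Lemma cenB z : in_center br z <-> (z <= Bc)%MS.
Proof. by rewrite cenP /Bc -lock eq_row_base sub_kermx; split => [->//|/eqP]. Qed.

Lemma cen_mulB y : in_center br (y *m Bc).
Proof. by apply/cenB; exact: submxMl. Qed.

Definition Mc := locked (Bc *m G *m Bc^T).

Lemma ipB v y : ip (v *m Bc) (y *m Bc) = (v *m Mc *m y^T) 0 0.
Proof. by rewrite /ip /Mc -lock trmx_mul !mulmxA. Qed.

Lemma Mc_unit : Mc \in unitmx.
Proof.
rewrite -row_free_unit; apply: inj_row_free => v hv.
have h0 : v *m Bc = 0.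
  apply: Hcn; first exact: cen_mulB.
  move=> c /cenB /submxP [y ->].
  by rewrite ipB hv mul0mx mxE.
have hf : row_free Bc by rewrite /Bc -lock; exact: row_base_free.
apply: (row_free_inj hf).
by rewrite /= h0 mul0mx.
Qed.

Definition Pz := locked (G *m Bc^T *m invmx Mc *m Bc).
Definition Pv := locked (1%:M - Pz).

Lemma cen_Pz (x : V) : in_center br (x *m Pz).
Proof. rewrite /Pz -lock mulmxA; exact: cen_mulB. Qed.

Lemma ip_Pv (x c : V) : in_center br c -> ip (x *m Pv) c = 0.
Proof.
move=> /cenB /submxP [y ->]; rewrite /Pv -lock mulmxBr mulmx1 ipBl /Pz -lock mulmxA ipB.
by rewrite !mulmxA mulmxKV ?Mc_unit // /ip trmx_mul !mulmxA subrr.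
Qed.


Lemma cenB' (c d : V) : in_center br c -> in_center br d -> in_center br (c - d).
Proof. by move=> hc hd y; rewrite (linB (brl y)) hc hd subrr. Qed.

Lemma cen_r (c x : V) : in_center br c -> br x c = 0.
Proof. by move=> hc; rewrite brN hc oppr0. Qed.

Lemma PvM : Pv = 1%:M - Pz.
Proof. by rewrite /Pv -lock. Qed.

Lemma PvE (x : V) : x *m Pv = x - x *m Pz.
Proof. by rewrite /Pv -lock mulmxBr mulmx1. Qed.

Lemma Pz_cen (c : V) : in_center br c -> c *m Pz = c.
Proof.
move=> hc; apply/eqP; rewrite eq_sym -subr_eq0 -PvE; apply/eqP.
apply: Hcn; first by rewrite PvE; apply: cenB' => //; exact: cen_Pz.
by move=> c' hc'; apply: ip_Pv.
Qed.

Lemma ortho_Pz (t : V) : (forall c, in_center br c -> ip t c = 0) -> t *m Pz = 0.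
Proof.
move=> h; apply: Hcn; first exact: cen_Pz.
move=> c hc; have := ip_Pv t hc; rewrite PvE ipBl h // => /eqP.
by rewrite sub0r oppr_eq0 => /eqP.
Qed.

Lemma PzPv (x : V) : x *m Pz + x *m Pv = x.
Proof. by rewrite PvE addrC subrK. Qed.

Lemma Pz_sym (x t : V) : ip (x *m Pz) t = ip x (t *m Pz).
Proof.
rewrite -{1}(PzPv t) -{2}(PzPv x) ipDr ipDl.
rewrite [ip (x *m Pz) (t *m Pv)]ipC !ip_Pv ?addr0 ?add0r //; exact: cen_Pz.
Qed.

Lemma PzPz (x : V) : x *m Pz *m Pz = x *m Pz.
Proof. by rewrite Pz_cen //; exact: cen_Pz. Qed.

Lemma Pv_sym (x t : V) : ip (x *m Pv) t = ip x (t *m Pv).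
Proof. by rewrite !PvE ipBl ipBr Pz_sym. Qed.

Definition Ad (a : V) := locked (matf (fun x => br x a)).
Definition Jm (a : V) := locked (matf (Jop br G a)).
Definition Km (a : V) := locked (matf (fun x => Jop br G x a)).

Lemma AdP (a x : V) : x *m Ad a = br x a.
Proof. by rewrite /Ad -lock matfP //; exact: brl. Qed.
Lemma JmP (a x : V) : x *m Jm a = Jop br G a x.
Proof. by rewrite /Jm -lock matfP //; exact: Jop_linr. Qed.
Lemma KmP (a x : V) : x *m Km a = Jop br G x a.
Proof. by rewrite /Km -lock matfP //; exact: Jop_linl. Qed.

Local Opaque Ad Jm Km Pz Pv.

Lemma Jop_cen_ortho (b x : V) : (forall c, in_center br c -> ip b c = 0) -> Jop br G b x = 0.
Proof.
move=> hb; apply: ip_inj => t; rewrite ipJ ip0l; apply: hb; exact: cen_br.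
Qed.

Lemma Jop_in_v (a x c : V) : in_center br c -> ip (Jop br G a x) c = 0.
Proof. by move=> hc; rewrite ipJ cen_r // ip0r. Qed.

Lemma B1 a : Ad a *m Pz = Ad a.
Proof. by apply: mx_ext => x; rewrite mulmxA !AdP Pz_cen //; exact: cen_br. Qed.
Lemma B2 a : Pz *m Ad a = 0.
Proof. by apply: mx_ext => x; rewrite mulmxA AdP cen_Pz mulmx0. Qed.
Lemma B3 a : Jm a *m Pz = 0.
Proof.
apply: mx_ext => x; rewrite mulmxA JmP mulmx0; apply: ortho_Pz => c hc.
exact: Jop_in_v.
Qed.
Lemma B4 a : Pz *m Jm a = 0.
Proof.
apply: mx_ext => x; rewrite mulmxA JmP mulmx0; apply: ip_inj => t.
by rewrite ipJ ip0l cen_Pz ip0r.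
Qed.
Lemma B5 a : Km a *m Pz = 0.
Proof.
apply: mx_ext => x; rewrite mulmxA KmP mulmx0; apply: ortho_Pz => c hc.
exact: Jop_in_v.
Qed.
Lemma B6 a : Pz *m Km a = Km a.
Proof.
apply: mx_ext => x; rewrite mulmxA !KmP -{2}(PzPv x) JopDl.
rewrite (@Jop_cen_ortho (x *m Pv)) ?addr0 // => c hc; exact: ip_Pv.
Qed.
Lemma Jm_Pz a : Jm a = Jm (a *m Pz).
Proof.
apply: mx_ext => x; rewrite !JmP -{1}(PzPv a) JopDl.
rewrite (@Jop_cen_ortho (a *m Pv)) ?addr0 // => c hc; exact: ip_Pv.
Qed.

Lemma trJ a : \tr (Jm a) = 0.
Proof.
have hs : (Jm a *m G)^T = - (Jm a *m G).
  have e : forall k l, (Jm a *m G) k l = ip a (br 'e_k 'e_l).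
    move=> k l; rewrite -ipJ ipe -JmP -rowE.
    by rewrite -row_mul /row mxE.
  by apply/matrixP => i j; rewrite [LHS]mxE [RHS]mxE !e brN ipNr.
have : \tr (Jm a) = - \tr (Jm a).
  rewrite -{1}(mulmxK Gunit (Jm a)) -[LHS]mxtrace_tr trmx_mul hs Gisym mulmxN.
  by rewrite -scaleN1r mxtraceZ mxtrace_mulC mulmxK // mulN1r.
move/eqP; rewrite -subr_eq0 opprK -mulr2n -mulr_natr mulf_eq0 => /orP [/eqP //|].
by rewrite pnatr_eq0.
Qed.


Definition Nm (a : V) := locked (2^-1 *: (Ad a - Km a - Jm a)).
Definition Mm (a : V) := locked (- 2^-1 *: (Ad a + Jm a + Km a)).

Lemma NmP (x a : V) : x *m Nm a = nabla br G x a.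
Proof. by rewrite /Nm -lock -scalemxAr !mulmxBr AdP KmP JmP nablaE. Qed.
Lemma MmP (x a : V) : x *m Mm a = nabla br G a x.
Proof.
rewrite /Mm -lock -scalemxAr !mulmxDr AdP KmP JmP nablaE scaleNr -scalerN.
by rewrite !opprD [br x a]brN opprK.
Qed.

Lemma curvE (x y w : V) : curv br G x y w =
  x *m (Nm (nabla br G y w) - Nm w *m Mm y - Ad y *m Nm w).
Proof. by rewrite /curv !mulmxBr !mulmxA !NmP MmP AdP. Qed.

Lemma ricciE (y w : V) : ricci_tensor br G y w =
  \tr (Nm (nabla br G y w) - Nm w *m Mm y - Ad y *m Nm w).
Proof.
rewrite /ricci_tensor /mxtrace; apply: eq_bigr => i _.
by rewrite curvE /ev -rowE /row mxE.
Qed.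

Lemma trB (A B : 'M[R]_m) : \tr (A - B) = \tr A - \tr B.
Proof. by rewrite mxtraceD -scaleN1r mxtraceZ mulN1r. Qed.

Lemma tr_mul0r (A B : 'M[R]_m) : B = 0 -> \tr (A *m B) = 0.
Proof. by move=> ->; rewrite mulmx0 mxtrace0. Qed.
Lemma tr_mul0l (A B : 'M[R]_m) : A = 0 -> \tr (A *m B) = 0.
Proof. by move=> ->; rewrite mul0mx mxtrace0. Qed.

Lemma trz (A : 'M[R]_m) : A = 0 -> \tr A = 0.
Proof. by move=> ->; rewrite mxtrace0. Qed.
Lemma trA a : \tr (Ad a) = 0.
Proof. rewrite -(B1 a) mxtrace_mulC; apply: trz; exact: B2. Qed.
Lemma trK a : \tr (Km a) = 0.
Proof. rewrite -(B6 a) mxtrace_mulC; apply: trz; exact: B5. Qed.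
Lemma trAA a b : \tr (Ad a *m Ad b) = 0.
Proof. rewrite -(B1 a) -mulmxA; apply: tr_mul0r; exact: B2. Qed.
Lemma trAJ a b : \tr (Ad a *m Jm b) = 0.
Proof. rewrite -(B1 a) -mulmxA; apply: tr_mul0r; exact: B4. Qed.
Lemma trKK a b : \tr (Km a *m Km b) = 0.
Proof. rewrite -(B6 b) mulmxA; apply: tr_mul0l; exact: B5. Qed.
Lemma trJK a b : \tr (Jm a *m Km b) = 0.
Proof. rewrite -(B6 b) mulmxA; apply: tr_mul0l; exact: B3. Qed.
Lemma trKJ a b : \tr (Km a *m Jm b) = 0.
Proof.
rewrite -(B6 a) -mulmxA (mxtrace_mulC Pz) -mulmxA; apply: tr_mul0r; exact: B3.
Qed.
Lemma trJA a b : \tr (Jm a *m Ad b) = 0.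
Proof. by rewrite mxtrace_mulC trAJ. Qed.

Lemma ricci_gen (y w : V) : ricci_tensor br G y w =
  4^-1 * (\tr (Ad w *m Km y) + \tr (Ad y *m Km w) - \tr (Jm w *m Jm y)).
Proof.
rewrite ricciE !trB.
have T1 : \tr (Nm (nabla br G y w)) = 0.
  by rewrite /Nm -lock mxtraceZ !trB trA trK trJ !subr0 mulr0.
have T2 : \tr (Nm w *m Mm y) =
    - 4^-1 * (\tr (Ad w *m Km y) - \tr (Ad y *m Km w) - \tr (Jm w *m Jm y)).
  rewrite /Nm /Mm -!lock -scalemxAl -scalemxAr scalerA mxtraceZ.
  rewrite !mulmxBl !mulmxDr !trB !mxtraceD.
  rewrite (trAA w y) (trAJ w y) (trKK w y) (trJK w y).
  rewrite (trKJ w y) (trJA w y) (mxtrace_mulC (Km w) (Ad y)).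
  have h4 : (4 : R) = 2 * 2 by rewrite -natrM.
  rewrite h4 invfM; ring.
have T3 : \tr (Ad y *m Nm w) = - 2^-1 * \tr (Ad y *m Km w).
  rewrite /Nm -lock -scalemxAr mxtraceZ !mulmxBr !trB (trAA y w) (trAJ y w).
  ring.
rewrite T1 T2 T3.
have h4 : (4 : R) = 2 * 2 by rewrite -natrM.
rewrite h4 invfM.
by field.
Qed.


Hypothesis HH : pseudoH_type br G.

Lemma JmD a b : Jm (a + b) = Jm a + Jm b.
Proof. by apply: mx_ext => x; rewrite mulmxDr !JmP JopDl. Qed.

Lemma Jm_sum (c : 'I_m -> R) (v : 'I_m -> V) :
  Jm (\sum_k c k *: v k) = \sum_k c k *: Jm (v k).
Proof.
apply: mx_ext => x; rewrite JmP.
have /= -> := lin_sum c v (Jop_linl x).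
by rewrite mulmx_sumr; apply: eq_bigr => k _; rewrite -scalemxAr JmP.
Qed.

Lemma JJz z : in_center br z -> Jm z *m Jm z = ip z z *: Pv.
Proof.
move=> hz; apply: mx_ext => x; rewrite mulmxA !JmP -scalemxAr.
rewrite -{1}(PzPv x) (linD (Jop_linr z)) -(JmP z (x *m Pz)) -mulmxA B4 mulmx0 add0r.
rewrite HH // => c hc; rewrite ipC; exact: ip_Pv.
Qed.

Lemma JJ a : Jm a *m Jm a = ip (a *m Pz) (a *m Pz) *: Pv.
Proof. by rewrite Jm_Pz JJz //; exact: cen_Pz. Qed.

Lemma JJ2 a b :
  Jm a *m Jm b + Jm b *m Jm a = (2 * ip (a *m Pz) (b *m Pz)) *: Pv.
Proof.
have := JJ (a + b); rewrite JmD mulmxDl !mulmxDr JJ (JJ b).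
rewrite !mulmxDl !ipDl !ipDr [ip (b *m Pz) (a *m Pz)]ipC !scalerDl => h.
have e : Jm a *m Jm b + Jm b *m Jm a =
    ip (a *m Pz) (b *m Pz) *: Pv + ip (a *m Pz) (b *m Pz) *: Pv.
  apply: (addrI (ip (a *m Pz) (a *m Pz) *: Pv)).
  apply: (addIr (ip (b *m Pz) (b *m Pz) *: Pv)).
  by move: h; rewrite -!addrA => ->.
by rewrite e -scalerDl; congr (_ *: _); ring.
Qed.

Lemma trJJ y w : \tr (Jm w *m Jm y) = ip (w *m Pz) (y *m Pz) * \tr Pv.
Proof.
have h : 2 * \tr (Jm w *m Jm y) = 2 * (ip (w *m Pz) (y *m Pz) * \tr Pv).
  by rewrite mulr2n mulrDl mul1r -{2}(mxtrace_mulC (Jm y)) -mxtraceD JJ2 mxtraceZ mulrA.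
by move: h => /(mulfI _) -> //; rewrite pnatr_eq0.
Qed.


Lemma ip_dual (x : V) j : ip x ('e_j *m Gi) = x 0 j.
Proof. by rewrite /ip trmx_mul Gisym trmx_delta mulmxA mulmxK // -colE !mxE. Qed.

Lemma ip_sum (I : finType) (v : I -> V) t : ip (\sum_i v i) t = \sum_i ip (v i) t.
Proof.
apply: (big_rec2 (fun s u => ip s t = u)); first exact: ip0l.
by move=> i s u _ <-; rewrite ipDl.
Qed.

Lemma Jop_exp (x y : V) : Jop br G x y = \sum_j x 0 j *: Jop br G 'e_j y.
Proof. rewrite {1}(ev_sum x); exact: (lin_sum _ _ (Jop_linl y)). Qed.

Definition Cm := \sum_j Jm 'e_j *m Jm ('e_j *m Gi).

Lemma trAK (w y : V) : \tr (Ad w *m Km y) = ip (y *m Cm) w.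
Proof.
rewrite /mxtrace /Cm mulmx_sumr.
transitivity (\sum_i ip (y *m (Jm 'e_i *m Jm ('e_i *m Gi))) w); last first.
  by symmetry; apply: ip_sum.
transitivity (\sum_i \sum_j ip (Jop br G ('e_j *m Gi) 'e_i) w * (Jop br G 'e_j y) 0 i).
  apply: eq_bigr => i _.
  have -> : (Ad w *m Km y) i i = (('e_i : V) *m Ad w *m Km y) 0 i.
    by rewrite -mulmxA -rowE /row mxE.
  rewrite AdP KmP Jop_exp.
  rewrite summxE; apply: eq_bigr => j _; rewrite mxE -ip_dual ipC ipJ.
  by [].
rewrite exchange_big /=; apply: eq_bigr => j _.
rewrite mulmxA (JmP ('e_j : V) y) (@mulmx_sum_row _ m m (Jop br G ('e_j : V) y)) ip_suml; apply: eq_bigr => i _.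
by rewrite rowE JmP mulrC.
Qed.

Definition qz := \sum_j ip (('e_j : V) *m Pz) (('e_j : V) *m Gi *m Pz).

Lemma rowGi j : ('e_j : V) *m Gi = \sum_k Gi j k *: ('e_k : V).
Proof.
rewrite {1}(ev_sum ('e_j *m Gi)); apply: eq_bigr => k _.
by rewrite -rowE /row mxE.
Qed.

Lemma Cm_eq : Cm = qz *: Pv.
Proof.
pose Cm' := \sum_j Jm ('e_j *m Gi) *m Jm 'e_j.
have e1 : Cm = \sum_j \sum_k Gi j k *: (Jm 'e_j *m Jm 'e_k).
  apply: eq_bigr => j _; rewrite rowGi Jm_sum mulmx_sumr.
  by apply: eq_bigr => k _; rewrite scalemxAr.
have e2 : Cm' = Cm.
  rewrite e1 /Cm' exchange_big /=; apply: eq_bigr => j _.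
  rewrite rowGi Jm_sum mulmx_suml; apply: eq_bigr => k _.
  have -> : Gi k j = Gi j k by rewrite -[in LHS]Gisym mxE.
  by rewrite scalemxAl.
have e3 : Cm + Cm' = (qz + qz) *: Pv.
  rewrite /Cm /Cm' -big_split /=.
  rewrite (eq_bigr (fun j => (2 * ip ('e_j *m Pz) ('e_j *m Gi *m Pz)) *: Pv)).
    by rewrite -scaler_suml -mulr_sumr /qz mulr2n mulrDl mul1r.
  by move=> j _; rewrite JJ2.
move: e3; rewrite e2 -mulr2n -scaler_nat => e3.
have h2 : (2 : R) != 0 by rewrite pnatr_eq0.
have -> : Cm = 2^-1 *: (2%:R *: Cm) by rewrite scalerA mulVf // scale1r.
by rewrite e3 scalerA; congr (_ *: _); field.
Qed.

Lemma trAK2 (w y : V) : \tr (Ad w *m Km y) = qz * ip (y *m Pv) w.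
Proof. by rewrite trAK Cm_eq -scalemxAr ipZl. Qed.

Definition pv := \tr Pv.
Definition Rm := (qz / 2) *: Pv - (pv / 4) *: Pz.

Lemma ricci_final (y w : V) : ricci_tensor br G y w = ip (y *m Rm) w.
Proof.
rewrite ricci_gen !trAK2 trJJ /Rm mulmxBr -!scalemxAr ipBl !ipZl.
rewrite [ip (w *m Pv) y]ipC -Pv_sym ipC.
rewrite [ip (w *m Pz) (y *m Pz)]ipC Pz_sym PzPz -/pv.
have h4 : (4 : R) = 2 * 2 by rewrite -natrM.
rewrite h4 invfM -(Pz_sym y w).
have h2 : (2 : R) != 0 by rewrite pnatr_eq0.
by field.
Qed.

Lemma ricci_op_eq : ricci_op br G = Rm.
Proof.
rewrite /ricci_op.
have -> : \matrix_(i, j) ricci_tensor br G (ev R i) (ev R j) = Rm *m G.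
  apply/matrixP => i j; rewrite mxE ricci_final /ev ipe -mulmxA -rowE.
  by rewrite /row mxE.
by rewrite mulmxK.
Qed.



Lemma final_inside : exists (c : R) (D : 'M[R]_m),
    is_derivation br D /\ ricci_op br G = c%:M + D.
Proof.
exists (2 * (qz / 2) + pv / 4), ((- (pv / 4) - qz / 2) *: (1%:M + Pz)).
split.
  move=> x y.
  have hD : forall v : V, v *m ((- (pv / 4) - qz / 2) *: (1%:M + Pz)) =
      (- (pv / 4) - qz / 2) *: (v + v *m Pz).
    by move=> v; rewrite -scalemxAr mulmxDr mulmx1.
  rewrite !hD (linZ (brl y)) (linZ (brr x)) (linD (brl y)) (linD (brr x)).
  rewrite Pz_cen; last exact: cen_br.
  rewrite cen_Pz (@cen_r (y *m Pz)); last exact: cen_Pz.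
  by rewrite !addr0 -scalerDr.
rewrite ricci_op_eq /Rm PvM; apply/matrixP => i j; rewrite !mxE.
ring.
Qed.

End Main.

Unset Implicit Arguments.
Set Strict Implicit.

Theorem mainTheorem1 (R : realType) (m : nat)
    (br : 'rV[R]_m -> 'rV[R]_m -> 'rV[R]_m) (G : 'M[R]_m) :
  is_lie_bracket br ->
  two_step_nilpotent br ->
  pseudo_metric G ->
  center_nondegenerate br G ->
  pseudoH_type br G ->
  exists (c : R) (D : 'M[R]_m),
    is_derivation br D /\ ricci_op br G = c%:M + D.
Proof. by move=> h1 h2 h3 h4 h5; apply: final_inside. Qed.
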